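(* (a) The integers $n>1$ with exactly one distinct prime divisor satisfying $F_n=D_n$ are exactly the powers $2^k$, $k\ge1$. (b) If $n$ has exactly two distinct prime divisors and $F_n=D_n$, then $n=2^k(2^k+1)^j$ for some positive integers $k,j$ with $2^k+1$ prime.
   Context: For a composite integer $m$, let $d(m)$ denote the largest divisor of $m$ with $1<d(m)<m$. Define $f$ on integers $m>1$ by $f(m)=m-1$ if $m$ is prime and $f(m)=m-d(m)$ if $m$ is composite. Let $f^{(0)}(m)=m$, $f^{(i)}=f\circ f^{(i-1)}$. Define $F_m=\{m,f(m),f^{(2)}(m),\dots,1\}$, the set of iterates of $f$ from $m$ up to and including the first occurrence of $1$, and let $D_m$ be the set of positive divisors of $m$. *)

(* Defs.v *)
From mathcomp Require Import all_boot.
Set Implicit Arguments. Unset Strict Implicit. Unset Printing Implicit Defensive.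

(* d(m): the largest divisor of m with 1 < d(m) < m (meaningful for composite m). *)
Definition dlarge (m : nat) : nat := \max_(d < m | (1 < d) && (d %| m)) d.

Definition fstep (m : nat) : nat := if prime m then m.-1 else m - dlarge m.

(* F_m: the set of iterates m, f(m), f^(2)(m), ... up to and including the
   first occurrence of 1. *)
Definition inF (m x : nat) : Prop :=
  exists i, x = iter i fstep m /\ forall j, j < i -> iter j fstep m <> 1.

Definition F_eq_D (m : nat) : Prop :=
  forall x, inF m x <-> (0 < x /\ x %| m).

(* Main.v *)
Require Import Defs.
From mathcomp Require Import all_boot.
From mathcomp Require Import zify.

Lemma dlarge_eq m p : 0 < m -> 1 < p -> p %| m -> 1 < m %/ p ->
  (forall e, 1 < e -> e %| m -> p <= e) -> dlarge m = m %/ p.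
Proof.
move=> m0 p1 pm mp1 H.
have Hm : m %/ p * p = m by rewrite divnK.
apply/eqP; rewrite eqn_leq; apply/andP; split.
- apply/bigmax_leqP => d /andP[d1 dm].
  have Hd := divnK dm.
  have Hlt : (d : nat) < m by [].
  set e := m %/ d in Hd.
  have e1 : 1 < e by nia.
  have pe : p <= e by apply: H => //; rewrite dvdn_div.
  rewrite leq_divRL; last by lia.
  nia.
- have Hl : m %/ p < m by nia.
  apply: (leq_bigmax_cond (Ordinal Hl)) => /=.
  by rewrite mp1 dvdn_div.

Qed.

Lemma dlarge_le m : dlarge m <= m.-1.
Proof. apply/bigmax_leqP => d _; have := ltn_ord d; lia. Qed.

Lemma fstep1 : fstep 1 = 1.
Proof. rewrite /fstep /=; have := dlarge_le 1; lia. Qed.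

Lemma fstep_half m : 0 < m -> fstep (2 * m) = m.
Proof.
move=> m0; rewrite /fstep.
case: (ltnP 1 m) => hm; last first.
  by have -> : m = 1 by lia.
have -> : prime (2 * m) = false.
  apply/negbTE/primePn; right; exists 2; last by rewrite dvdn_mulr.
  by rewrite /=; lia.
rewrite (@dlarge_eq _ 2) //; try lia.

Qed.

Lemma fstep_pow q j : prime q -> fstep (q ^ j.+1) = q ^ j * q.-1.
Proof.
move=> pq; have q1 := prime_gt1 pq.
case: j => [|j].
  by rewrite /fstep expn1 pq expn0 mul1n.
rewrite /fstep.
have -> : prime (q ^ j.+2) = false.
  apply/negbTE/primePn; right; exists q; last by rewrite dvdn_exp.
  rewrite q1 /=. rewrite -[X in X < _]expn1 ltn_exp2l //.
have qp : 0 < q ^ j.+1 by rewrite expn_gt0; lia.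
rewrite (@dlarge_eq _ q) //.
- rewrite expnS mulKn; last lia. rewrite [in LHS]expnS. 
  have -> : q ^ j.+1 = q * q ^ j by rewrite expnS.
  move: (q * q ^ j) => t; nia.
- rewrite expn_gt0; lia.
- by rewrite dvdn_exp.
- rewrite expnS mulKn; last lia. rewrite expnS. nia.
- move=> e e1 /(dvdn_pfactor _ _ pq) [i _ Ei]; subst e.
  case: i e1 => [|i] e1 //.
  rewrite -[X in X <= _]expn1 leq_exp2l //.

Qed.

Lemma fstep_odd n : 1 < n -> odd n -> ~~ odd (fstep n) /\ 0 < fstep n.
Proof.
move=> n1 on; rewrite /fstep; case: ifP => pn.
  by case: n n1 on {pn} => // s s1 /= os.
have pp := pdiv_prime n1.
have p1 := prime_gt1 pp.
have pd := pdiv_dvd n.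
have pl : pdiv n <= n by apply: dvdn_leq; lia.
have pne : pdiv n != n by apply/eqP => E; rewrite -E pp in pn.
have Hm := divnK pd.
have Hd : 1 < n %/ pdiv n by nia.
rewrite (@dlarge_eq _ (pdiv n)) //; try lia; last first.
  by move=> e e1 ed; apply: pdiv_min_dvd.
have od : odd (n %/ pdiv n) by move: on; rewrite -{1}Hm oddM => /andP[].
rewrite oddB; last by nia.
rewrite on od; split => //; nia.
Qed.


Lemma F_even n : 1 < n -> F_eq_D n -> 2 %| n.
Proof.
move=> n1 H.
have [_ [f0 fd]] : inF n (fstep n) /\ (0 < fstep n /\ fstep n %| n).
  have h : inF n (fstep n).
    exists 1; split => // j; rewrite ltnS leqn0 => /eqP -> /=; lia.
  by split => //; apply/H.
case on: (odd n); last by rewrite dvdn2 on.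
have [ev _] := @fstep_odd n n1 on.
have := dvdn_odd fd on. by rewrite (negbTE ev).
Qed.

Lemma iter_pow2 k i : iter i fstep (2^k) = 2^(k-i).
Proof.
elim: i => [|i IH]; first by rewrite subn0.
rewrite iterS IH; case E: (k - i) => [|s].
  have -> : k - i.+1 = 0 by lia.
  by rewrite expn0 fstep1.
have -> : k - i.+1 = s by lia.
by rewrite expnS fstep_half // expn_gt0.
Qed.

Lemma F_pow2 k : F_eq_D (2^k).
Proof.
move=> x; split.
- case=> i [-> _]; rewrite iter_pow2 expn_gt0 /=; split => //.
  by rewrite dvdn_exp2l // leq_subr.
- case=> x0 /(dvdn_pfactor _ _ (isT : prime 2)) [m mk ->].
  exists (k - m); split; first by rewrite iter_pow2; congr (_ ^ _); lia.
  move=> j jl; rewrite iter_pow2 => /eqP; rewrite -[X in _ == X](expn0 2) eqn_exp2l //; lia.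
Qed.

Lemma notdiv a i j q : prime q -> 2 < q -> 0 < j -> 2^a <> 2^i * q^j.
Proof.
move=> pq q2 j0 E.
have : q %| 2 ^ a by rewrite E; apply: dvdn_mull; apply: dvdn_exp.
rewrite Euclid_dvdX // => /andP[/dvdn_leq] h _; have := h isT; lia.
Qed.

Lemma part_b a b q : prime q -> 2 < q -> 0 < a -> 0 < b ->
  F_eq_D (2^a * q^b) -> q = (2^a).+1.
Proof.
move=> pq q2 a0 b0 H.
have qb1 : 1 < q ^ b.
  case: b b0 {H} => // b _; rewrite expnS; have : 0 < q ^ b by rewrite expn_gt0; lia.
  nia.
have iterA : forall i, i <= a -> iter i fstep (2^a * q^b) = 2^(a-i) * q^b.
  elim=> [|i IH] ia; first by rewrite subn0.
  rewrite iterS IH; last lia.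
  have -> : a - i = (a - i.+1).+1 by lia.
  rewrite expnS -mulnA fstep_half //; rewrite muln_gt0 expn_gt0 /=; lia.
case: b b0 qb1 {H iterA} (H) (iterA) => // b' _ qb1 H iterA.
have fy : fstep (iter a fstep (2 ^ a * q ^ b'.+1)) = q ^ b' * q.-1.
  by rewrite iterA // subnn expn0 mul1n fstep_pow.
have yin : inF (2 ^ a * q ^ b'.+1) (q ^ b' * q.-1).
  exists a.+1; split; first by rewrite iterS fy.
  move=> j ja; rewrite iterA; last lia.
  have : 0 < 2 ^ (a - j) by rewrite expn_gt0.
  nia.
have [_ yd] := (H _).1 yin.
have yd' : q.-1 %| 2 ^ a * q.
  have E : 2 ^ a * q ^ b'.+1 = q ^ b' * (2 ^ a * q) by rewrite expnS; lia.
  rewrite E dvdn_pmul2l in yd => //; rewrite expn_gt0; lia.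
have [c ca Ec] : exists2 c, c <= a & q.-1 = 2 ^ c.
  apply/(dvdn_pfactor _ _ (isT : prime 2)).
  have qr : q = q.-1.+1 by lia.
  by move: yd'; rewrite {2}qr mulnC (Gauss_dvdr _ (coprimenS _)).
have qE : q = (2 ^ c).+1 by lia.
case: (ltnP c a) => ac; last by have -> : a = c by lia.
exfalso.
pose P x := (exists i, i <= a /\ x = 2^i * q^b'.+1) \/
            (exists i j, i <= c /\ j <= b' /\ x = 2^i * q^j).
have stepP : forall x, P x -> P (fstep x).
  move=> x [[i [ia ->]]|[i [j [ic [jb ->]]]]].
  - case: i ia => [|i] ia.
      right; exists c, b'; split => //; split => //.
      by rewrite mul1n fstep_pow // Ec mulnC.
    left; exists i; split; first lia.
    by rewrite expnS -mulnA fstep_half // muln_gt0 !expn_gt0 (ltn_trans _ q2).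
  - case: i ic => [|i] ic.
      case: j jb => [|j] jb.
        by right; exists 0, 0; rewrite mul1n expn0 fstep1.
      right; exists c, j; split => //; split; first lia.
      by rewrite mul1n fstep_pow // Ec mulnC.
    right; exists i, j; split; first lia; split => //.
    by rewrite expnS -mulnA fstep_half // muln_gt0 !expn_gt0 (ltn_trans _ q2).
have allP : forall i, P (iter i fstep (2 ^ a * q ^ b'.+1)).
  elim=> [|i IH]; first by left; exists a.
  by rewrite iterS; apply: stepP.
have [i [Ei _]] : inF (2 ^ a * q ^ b'.+1) (2 ^ a).
  by apply/H; rewrite expn_gt0 dvdn_mulr.
case: (allP i) => [[i' [_ E]]|[i' [j [ic [_ E]]]]]; rewrite -Ei in E.
  exact: (@notdiv _ _ _ _ pq q2 (ltn0Sn _) E).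
case: j E => [|j] E.
  move/eqP: E; rewrite expn0 muln1 eqn_exp2l //; lia.
exact: (@notdiv _ _ _ _ pq q2 (ltn0Sn _) E).
Qed.

Lemma decomp n : 0 < n -> n = \prod_(p <- primes n) p ^ logn p n.
Proof. by move=> n0; rewrite {1}(prod_prime_decomp n0) prime_decompE big_map. Qed.

Theorem mainTheorem10 :
  (forall n : nat, 1 < n -> size (primes n) = 1 ->
     (F_eq_D n <-> exists k, 1 <= k /\ n = 2 ^ k))
  /\
  (forall n : nat, 1 < n -> size (primes n) = 2 -> F_eq_D n ->
     exists k j, 1 <= k /\ 1 <= j /\ prime (2 ^ k).+1 /\
                 n = 2 ^ k * (2 ^ k).+1 ^ j).
Proof.
split.
- move=> n n1 sz; split.
  + move=> H; have e2 := @F_even n n1 H.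
    have n0 : 0 < n by lia.
    have in2 : 2 \in primes n by rewrite mem_primes n0 e2.
    case E: (primes n) sz => [|p [|]] // _.
    rewrite E inE in in2; move/eqP: in2 => in2; subst p.
    exists (logn 2 n); split; first by rewrite logn_gt0 E inE.
    by rewrite {1}(@decomp n n0) E big_seq1.
  + by case=> k [k1 ->]; exact: F_pow2.
- move=> n n1 sz H; have e2 := @F_even n n1 H.
  have n0 : 0 < n by lia.
  have in2 : 2 \in primes n by rewrite mem_primes n0 e2.
  have srt := sorted_primes n.
  have mp : forall p, p \in primes n -> prime p by move=> p; rewrite mem_primes => /andP[].
  case E: (primes n) sz srt mp in2 => [|p1 [|p2 [|]]] // _ /= /andP[lt _] mp in2.
  have pp1 := mp p1 (mem_head _ _).
  have pp2 : prime p2 by apply: mp; rewrite !inE eqxx orbT.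
  have h1 := prime_gt1 pp1.
  have ep1 : p1 = 2.
    move: in2; rewrite !inE => /orP[/eqP|/eqP] //; lia.
  subst p1.
  have En : n = 2 ^ logn 2 n * p2 ^ logn p2 n.
    by rewrite {1}(@decomp n n0) E big_cons big_seq1.
  have a0 : 0 < logn 2 n by rewrite logn_gt0 E mem_head.
  have b0 : 0 < logn p2 n by rewrite logn_gt0 E !inE eqxx orbT.
  have H' : F_eq_D (2 ^ logn 2 n * p2 ^ logn p2 n) by rewrite -En.
  have qE := @part_b _ _ _ pp2 lt a0 b0 H'.
  exists (logn 2 n), (logn p2 n); split => //; split => //; split.
    by rewrite -qE.
  by rewrite -qE.
Qed.
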